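(* Let $p$ be a NetKAT program that contains no occurrence of $\mathsf{dup}$, and suppose the local compilation $\mathcal{C}(p)$ is defined and equals the forwarding decision diagram $d$. Then for every history $h$, $[\![p]\!]\,h = [\![d]\!]\,h$.
   Context: NetKAT. Fix finitely many fields $f_1,\dots,f_k$, each with natural-number values. A packet $pk$ assigns a natural number $pk.f$ to each field $f$; $pk[f:=n]$ is the packet updated at $f$. A history is a nonempty list of packets, written $pk::h$ (cons) or $\langle pk\rangle$ (singleton). Predicates: $a ::= 1 \mid 0 \mid f=n \mid a+b \mid a\cdot b \mid \neg a$. Programs: $p ::= a \mid f\leftarrow n \mid p+q \mid p\cdot q \mid p^* \mid \mathsf{dup}$. The semantics $[\![p]\!]$ maps histories to sets of histories: $[\![1]\!]h=\{h\}$; $[\![0]\!]h=\emptyset$; $[\![f=n]\!](pk::h)=\{pk::h\}$ if $pk.f=n$ and $\emptyset$ otherwise; $[\![\neg a]\!]h=\{h\}\setminus[\![a]\!]h$; $[\![f\leftarrow n]\!](pk::h)=\{pk[f:=n]::h\}$; $[\![p+q]\!]h=[\![p]\!]h\cup[\![q]\!]h$; $[\![p\cdot q]\!]h=\bigcup_{h'\in[\![p]\!]h}[\![q]\!]h'$; $[\![p^*]\!]h=\bigcup_{i\ge 0}F^i h$ with $F^0h=\{h\}$, $F^{i+1}h=\bigcup_{h'\in[\![p]\!]h}F^ih'$; $[\![\mathsf{dup}]\!](pk::h)=\{pk::pk::h\}$ (on predicates, $+$ and $\cdot$ act as disjunction and conjunction). Forwarding decision diagrams (FDDs). Fields and values carry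 total orders, both written $\sqsubset$. An action $a$ is a finite partial map from fields to values, written $\{f_1\leftarrow n_1,\dots,f_j\leftarrow n_j\}$ with distinct fields; $[\![a]\!](pk::h)=\{pk[f_1:=n_1]\cdots[f_j:=n_j]::h\}$. An FDD is either a constant $\{a_1,\dots,a_m\}$ (a finite set of actions) with $[\![\{a_1,\dots,a_m\}]\!]h=\bigcup_i[\![a_i]\!]h$, or a conditional $(f=n\ ?\ d_1 : d_2)$ with $[\![(f=n?d_1:d_2)]\!](pk::h)=[\![d_1]\!](pk::h)$ if $pk.f=n$ and $[\![d_2]\!](pk::h)$ otherwise. Thus $\{\}$ drops all packets and $\{\{\}\}$ is the identity. Operations on FDDs. Union $d_1+d_2$: $\{A_1\}+\{A_2\}=A_1\cup A_2$ (union of action sets); $(f=n?d_{11}:d_{12})+C=(f=n?d_{11}+C:d_{12}+C)$ for a constant $C$; for $D_2=(f_2=n_2?d_{21}:d_{22})$: $(f_1=n_1?d_{11}:d_{12})+D_2$ equals $(f_1=n_1?d_{11}+d_{21}:d_{12}+d_{22})$ if $f_1=f_2,n_1=n_2$; equals $(f_1=n_1?d_{11}+d_{22}:d_{12}+D_2)$ if $f_1=f_2$ and $n_1\sqsubset n_2$; equals $(f_1=n_1?d_{11}+D_2:d_{12}+D_2)$ if $f_1\sqsubset f_2$; the remaining cases are defined symmetrically. Positive restriction $(f=n)\Rightarrow d$: for a constant $d$ it is $(f=n?d:\{\})$; for $d=(f_1=n_1?d_{11}:d_{12})$ it is $(f=n?d_{11}:\{\})$ if $f=f_1,n=n_1$;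 $(f=n)\Rightarrow d_{12}$ if $f=f_1,n\neq n_1$; $(f=n?d:\{\})$ if $f\sqsubset f_1$; and $(f_1=n_1?(f=n)\Rightarrow d_{11}:(f=n)\Rightarrow d_{12})$ otherwise. Negative restriction $(f\neq n)\Rightarrow d$ is an FDD with $[\![(f\neq n)\Rightarrow d]\!](pk::h)=\emptyset$ if $pk.f=n$ and $=[\![d]\!](pk::h)$ otherwise. Sequencing of actions $a;a'$ is the right-biased merge (value of $a'$ where defined, else of $a$). Sequencing $d_1;d_2$: $a;\{a_1,\dots,a_m\}=\{a;a_1,\dots,a;a_m\}$; $a;(f=n?d_1:d_2)$ equals $a;d_1$ if $f\leftarrow n\in a$, equals $a;d_2$ if $f\leftarrow n'\in a$ with $n'\neq n$, and equals $(f=n?a;d_1:a;d_2)$ otherwise; $\{a_1,\dots,a_m\};d=(a_1;d)+\dots+(a_m;d)$ (which is $\{\}$ when $m=0$); $(f=n?d_{11}:d_{12});d_2=((f=n)\Rightarrow(d_{11};d_2))+((f\neq n)\Rightarrow(d_{12};d_2))$. Negation: $\neg\{\}=\{\{\}\}$; $\neg\{a_1,\dots,a_m\}=\{\}$ for $m\ge1$; $\neg(f=n?d_1:d_2)=(f=n?\neg d_1:\neg d_2)$. Star: $d^*$ is a fixed point of $d'\mapsto\{\{\}\}+(d;d')$ obtained by iteration. Local compilation $\mathcal{C}$: $\mathcal{C}(0)=\{\}$, $\mathcal{C}(1)=\{\{\}\}$, $\mathcal{C}(f\leftarrow n)=\{\{f\leftarrow n\}\}$, $\mathcal{C}(f=n)=(f=n?\{\{\}\}:\{\})$,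 $\mathcal{C}(\neg a)=\neg\mathcal{C}(a)$, $\mathcal{C}(p+q)=\mathcal{C}(p)+\mathcal{C}(q)$, $\mathcal{C}(p\cdot q)=\mathcal{C}(p);\mathcal{C}(q)$, $\mathcal{C}(p^* )=\mathcal{C}(p)^*$. *)

(* Defs.v *)
From HB Require Import structures.
From mathcomp Require Import all_boot.
From mathcomp Require Import finmap.

Set Implicit Arguments.
Unset Strict Implicit.
Unset Printing Implicit Defensive.

Local Open Scope fset_scope.

Definition packet (F : finType) := {ffun F -> nat}.
(* A (nonempty) history pk::h is represented as the pair (pk, h). *)
Definition history (F : finType) := (packet F * seq (packet F))%type.

Inductive npred (F : finType) :=
| PTrue | PFalse | PTest of F & nat
| POr of npred F & npred F | PAnd of npred F & npred F | PNot of npred F.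

Inductive prog (F : finType) :=
| PFilter of npred F
| PMod of F & nat
| PPar of prog F & prog F
| PSeq of prog F & prog F
| PStar of prog F
| PDup.

Arguments PTrue {F}. Arguments PFalse {F}. Arguments PDup {F}.

Inductive fdd (F : finType) :=
| FConst of {fset {ffun F -> option nat}}
| FCond of F & nat & fdd F & fdd F.

Definition strict_total (T : eqType) (lt : rel T) : Prop :=
  irreflexive lt /\ transitive lt /\ (forall x y, x != y -> lt x y || lt y x).

Section NetKAT.
Variable F : finType.

Definition upd (pk : packet F) (f : F) (n : nat) : packet F :=
  [ffun g => if g == f then n else pk g].

(* ---------- NetKAT semantics: [[p]] h h' means h' \in [[p]] h ---------- *)
Fixpoint psem (a : npred F) (h h' : history F) : Prop :=
  match a with
  | PTrue => h' = h
  | PFalse => False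
  | PTest f n => h' = h /\ h.1 f = n
  | POr a b => psem a h h' \/ psem b h h'
  | PAnd a b => exists h'', psem a h h'' /\ psem b h'' h'
  | PNot a => h' = h /\ ~ psem a h h
  end.

Fixpoint powr (R : history F -> history F -> Prop) (i : nat)
    (h h' : history F) : Prop :=
  match i with
  | 0 => h' = h
  | i.+1 => exists h'', R h h'' /\ powr R i h'' h'
  end.

Fixpoint sem (p : prog F) : history F -> history F -> Prop :=
  match p with
  | PFilter a => psem a
  | PMod f n => fun h h' => h' = (upd h.1 f n, h.2)
  | PPar p q => fun h h' => sem p h h' \/ sem q h h'
  | PSeq p q => fun h h' => exists h'', sem p h h'' /\ sem q h'' h'
  | PStar p => fun h h' => exists i, powr (sem p) i h h'
  | PDup => fun h h' => h' = (h.1, h.1 :: h.2)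
  end.

Fixpoint dup_free (p : prog F) : bool :=
  match p with
  | PFilter _ | PMod _ _ => true
  | PPar p q | PSeq p q => dup_free p && dup_free q
  | PStar p => dup_free p
  | PDup => false
  end.

Definition act_app (a : {ffun F -> option nat}) (h : history F) : history F :=
  ([ffun g => if a g is Some v then v else h.1 g], h.2).

Fixpoint fsem (d : fdd F) (h h' : history F) : Prop :=
  match d with
  | FConst A => exists2 a, a \in A & h' = act_app a h
  | FCond f n d1 d2 => if h.1 f == n then fsem d1 h h' else fsem d2 h h'
  end.

(* Specification of negative restriction (only given semantically). *)
Definition negres_spec (negres : F -> nat -> fdd F -> fdd F) : Prop :=
  forall f n d (h h' : history F),
    fsem (negres f n d) h h' <-> (if h.1 f == n then False else fsem d h h').

Variables (ltF : rel F) (ltV : rel nat).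
Variable negres : F -> nat -> fdd F -> fdd F.

Fixpoint funion (d1 d2 : fdd F) {struct d1} : fdd F :=
  match d1 with
  | FConst A1 =>
      (fix ua (d2 : fdd F) : fdd F :=
         match d2 with
         | FConst A2 => FConst (A1 `|` A2)
         | FCond f n d21 d22 => FCond f n (ua d21) (ua d22)
         end) d2
  | FCond f1 n1 d11 d12 =>
      (fix u2 (d2 : fdd F) : fdd F :=
         match d2 with
         | FConst C => FCond f1 n1 (funion d11 (FConst C)) (funion d12 (FConst C))
         | FCond f2 n2 d21 d22 =>
             if f1 == f2 then
               if n1 == n2 then FCond f1 n1 (funion d11 d21) (funion d12 d22)
               else if ltV n1 n2 then FCond f1 n1 (funion d11 d22) (funion d12 d2)
               else FCond f2 n2 (funion d12 d21) (u2 d22)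
             else if ltF f1 f2 then FCond f1 n1 (funion d11 d2) (funion d12 d2)
             else FCond f2 n2 (u2 d21) (u2 d22)
         end) d2
  end.

Fixpoint posres (f : F) (n : nat) (d : fdd F) : fdd F :=
  match d with
  | FConst _ => FCond f n d (FConst fset0)
  | FCond f1 n1 d11 d12 =>
      if f == f1 then
        if n == n1 then FCond f n d11 (FConst fset0) else posres f n d12
      else if ltF f f1 then FCond f n d (FConst fset0)
      else FCond f1 n1 (posres f n d11) (posres f n d12)
  end.

Definition act_comp (a a' : {ffun F -> option nat}) : {ffun F -> option nat} :=
  [ffun g => if a' g is Some v then Some v else a g].

Fixpoint act_seq (a : {ffun F -> option nat}) (d : fdd F) : fdd F :=
  match d with
  | FConst A => FConst [fset act_comp a x | x in A]
  | FCond f n d1 d2 =>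
      if a f == Some n then act_seq a d1
      else if a f is Some _ then act_seq a d2
      else FCond f n (act_seq a d1) (act_seq a d2)
  end.

Definition sum_acts (s : seq {ffun F -> option nat}) (d : fdd F) : fdd F :=
  match s with
  | [::] => FConst fset0
  | a :: s' => foldl (fun acc a' => funion acc (act_seq a' d)) (act_seq a d) s'
  end.

Fixpoint fseq (d1 d2 : fdd F) : fdd F :=
  match d1 with
  | FConst A => sum_acts (enum_fset A) d2
  | FCond f n d11 d12 => funion (posres f n (fseq d11 d2)) (negres f n (fseq d12 d2))
  end.

Definition id_act : {ffun F -> option nat} := [ffun => None].
Definition single_act (f : F) (n : nat) : {ffun F -> option nat} :=
  [ffun g => if g == f then Some n else None].
Definition id_fdd : fdd F := FConst [fset id_act].
Definition drop_fdd : fdd F := FConst fset0.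

Fixpoint fneg (d : fdd F) : fdd F :=
  match d with
  | FConst A => if A == fset0 then id_fdd else drop_fdd
  | FCond f n d1 d2 => FCond f n (fneg d1) (fneg d2)
  end.

Definition star_step (d d' : fdd F) : fdd F := funion id_fdd (fseq d d').
Definition is_star (d ds : fdd F) : Prop :=
  exists k, ds = iter k (star_step d) id_fdd /\ star_step d ds = ds.

(* ---------- local compilation (partial, hence a relation) ---------- *)
Fixpoint compp (a : npred F) : fdd F :=
  match a with
  | PTrue => id_fdd
  | PFalse => drop_fdd
  | PTest f n => FCond f n id_fdd drop_fdd
  | POr a b => funion (compp a) (compp b)
  | PAnd a b => fseq (compp a) (compp b)
  | PNot a => fneg (compp a)
  end.

Inductive compiles : prog F -> fdd F -> Prop :=
| comp_filter a : compiles (PFilter a) (compp a)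
| comp_mod f n : compiles (PMod f n) (FConst [fset single_act f n])
| comp_par p q dp dq :
    compiles p dp -> compiles q dq -> compiles (PPar p q) (funion dp dq)
| comp_seq p q dp dq :
    compiles p dp -> compiles q dq -> compiles (PSeq p q) (fseq dp dq)
| comp_star p dp ds :
    compiles p dp -> is_star dp ds -> compiles (PStar p) ds.

End NetKAT.

(* Main.v *)
Require Import Defs.
From mathcomp Require Import all_boot.
From mathcomp Require Import finmap.

Set Implicit Arguments.
Unset Strict Implicit.
Unset Printing Implicit Defensive.
Local Open Scope fset_scope.

Section Proofs.
Variable F : finType.
Variables (ltF : rel F) (ltV : rel nat).
Variable negres : F -> nat -> fdd F -> fdd F.
Hypothesis Hneg : negres_spec negres.

Lemma union_ok (d1 d2 : fdd F) (h h' : history F) :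
  fsem (funion ltF ltV d1 d2) h h' <-> fsem d1 h h' \/ fsem d2 h h'.
Proof.
elim: d1 d2 h h' => [A1|f1 n1 d11 IH11 d12 IH12] d2.
- elim: d2 => [A2|f2 n2 d21 IH21 d22 IH22] h h' /=.
  + split.
    * case=> a; rewrite in_fsetE => /orP[] Ha ->; [left|right]; by exists a.
    * case=> -[a Ha ->]; exists a => //; rewrite in_fsetE Ha ?orbT //.
  + by case: (h.1 f2 == n2); [rewrite IH21|rewrite IH22]; reflexivity.
- elim: d2 => [C|f2 n2 d21 IH21 d22 IH22] h h' /=.
  + by case: (h.1 f1 == n1); [rewrite IH11|rewrite IH12]; reflexivity.
  + case: eqP => [Ef|Nf].
    * subst f2. case: eqP => [En|Nn].
      - subst n2 => /=. by case: (h.1 f1 == n1); [rewrite IH11|rewrite IH12]; reflexivity.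
      - case: ifP => _ /=.
        + case: eqP => [E1|N1] /=.
          * rewrite IH11 (_ : (h.1 f1 == n2) = false); first reflexivity.
            by apply/eqP; rewrite E1.
          * rewrite IH12 /=; reflexivity.
        + case: eqP => [E2|N2] /=.
          * rewrite IH12 (_ : (h.1 f1 == n1) = false); first reflexivity.
            by apply/eqP; rewrite E2; apply/nesym.
          * rewrite IH22 /=; reflexivity.
    * case: ifP => _ /=.
      - by case: (h.1 f1 == n1); [rewrite IH11|rewrite IH12]; reflexivity.
      - by case: (h.1 f2 == n2); [rewrite IH21|rewrite IH22]; reflexivity.
Qed.


Lemma drop_ok (h h' : history F) : fsem (FConst fset0) h h' <-> False.
Proof. by split=> // -[a]; rewrite in_fsetE. Qed.

Lemma drop_ok' (h h' : history F) :
  (exists2 a, a \in (fset0 : {fset {ffun F -> option nat}}) & h' = act_app a h) <-> False.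
Proof. exact: drop_ok. Qed.

Lemma id_ok (h h' : history F) : fsem (id_fdd F) h h' <-> h' = h.
Proof.
have E : act_app (id_act F) h = h.
  by case: h => pk s; rewrite /act_app; congr pair; apply/ffunP=> g; rewrite !ffunE.
split.
- by case=> a; rewrite in_fsetE => /eqP -> ->.
- by move=> ->; exists (id_act F); rewrite ?in_fsetE // E.
Qed.

Lemma id_ok' (h h' : history F) :
  (exists2 a, a \in [fset id_act F] & h' = act_app a h) <-> h' = h.
Proof. exact: id_ok. Qed.

Lemma posres_ok f n (d : fdd F) (h h' : history F) :
  fsem (posres ltF f n d) h h' <-> (h.1 f == n) /\ fsem d h h'.
Proof.
elim: d h h' => [A|f1 n1 d1 IH1 d2 IH2] h h' /=.
- have [E|E] := eqVneq (h.1 f) n.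
  + by rewrite ?E ?eqxx; intuition.
  + by rewrite ?(negbTE E) drop_ok'; split; [case|case].
- case: eqP => [Ef|Nf].
  + subst f1. case: eqP => [En|Nn].
    * subst n1 => /=. have [E|E] := eqVneq (h.1 f) n.
      - by rewrite ?E ?eqxx; intuition.
      - by rewrite ?(negbTE E) drop_ok'; split; [case|case].
    * rewrite IH2. have [E|E] := eqVneq (h.1 f) n.
      - by rewrite E (introF eqP Nn).
      - by split; case.
  + case: ifP => _ /=.
    * have [E|E] := eqVneq (h.1 f) n.
      - by rewrite ?E ?eqxx; intuition.
      - by rewrite ?(negbTE E) drop_ok'; split; [case|case].
    * by case: (h.1 f1 == n1); [rewrite IH1|rewrite IH2]; reflexivity.
Qed.

Lemma act_app_comp (a x : {ffun F -> option nat}) (h : history F) :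
  act_app (act_comp a x) h = act_app x (act_app a h).
Proof.
rewrite /act_app /act_comp /=; congr pair; apply/ffunP=> g; rewrite !ffunE.
by case: (x g).
Qed.

Lemma actseq_ok a (d : fdd F) (h h' : history F) :
  fsem (act_seq a d) h h' <-> fsem d (act_app a h) h'.
Proof.
elim: d h h' => [A|f n d1 IH1 d2 IH2] h h' /=.
- split.
  + case=> y /imfsetP [x /= xA ->] ->. exists x => //. exact: act_app_comp.
  + case=> x xA ->. exists (act_comp a x); last by rewrite act_app_comp.
    by apply/imfsetP; exists x.
- have Ef : (act_app a h).1 f = if a f is Some v then v else h.1 f by rewrite ffunE.
  rewrite Ef. case E: (a f) => [v|] /=.
  + case: eqP => [[->]|Nv]; first by rewrite eqxx IH1; reflexivity.
    by rewrite IH2 (introF eqP (fun e => Nv (f_equal Some e))); reflexivity.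
  + by case: (h.1 f == n); [rewrite IH1|rewrite IH2]; reflexivity.
Qed.

Lemma foldl_ok (d : fdd F) s acc (h h' : history F) :
  fsem (foldl (fun acc a' => funion ltF ltV acc (act_seq a' d)) acc s) h h' <->
  fsem acc h h' \/ exists2 a, a \in s & fsem (act_seq a d) h h'.
Proof.
elim: s acc => [acc|a s IH acc] /=.
- by split; [left|case=> // -[]].
- rewrite IH union_ok. split.
  + case=> [[]|]; [by left| |]; [move=> H; right; exists a; rewrite ?inE ?eqxx //|].
    case=> b bs Hb; right; exists b; rewrite ?inE ?bs ?orbT //.
  + case=> [H|[b]]; first by left; left.
    rewrite inE => /orP[/eqP ->|bs] Hb; [left; right|right; exists b] => //.
Qed.

Lemma sumacts_ok (d : fdd F) s (h h' : history F) :
  fsem (sum_acts ltF ltV s d) h h' <-> exists2 a, a \in s & fsem (act_seq a d) h h'.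
Proof.
case: s => [|a s] /=.
- by rewrite ?drop_ok ?drop_ok'; split=> // -[x].
- apply: iff_trans (foldl_ok _ _ _ _ _) _. split.
  + case=> [H|[b bs Hb]]; [exists a; rewrite ?inE ?eqxx|exists b; rewrite ?inE ?bs ?orbT] => //.
  + case=> b; rewrite inE => /orP[/eqP ->|bs] Hb; [left|right; exists b] => //.
Qed.

Lemma fseq_ok (d1 d2 : fdd F) (h h' : history F) :
  fsem (fseq ltF ltV negres d1 d2) h h' <-> exists h'', fsem d1 h h'' /\ fsem d2 h'' h'.
Proof.
elim: d1 h h' => [A|f n d11 IH1 d12 IH2] h h' /=.
- rewrite sumacts_ok. split.
  + case=> a aA; rewrite actseq_ok => H. exists (act_app a h); split => //.
    by exists a.
  + case=> h'' [[a aA ->] H]. exists a => //. by rewrite actseq_ok.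
- rewrite union_ok posres_ok Hneg.
  case: eqVneq => _ /=; [rewrite IH1|rewrite IH2]; intuition; done.
Qed.

Lemma fneg_ok (d : fdd F) (h h' : history F) :
  fsem (fneg d) h h' <-> h' = h /\ ~ (exists h'', fsem d h h'').
Proof.
elim: d h h' => [A|f n d1 IH1 d2 IH2] h h' /=.
- case: eqP => [->|NA].
  + rewrite ?id_ok ?id_ok'. split; last by case.
    by move=> ->; split=> // -[h''] [a]; rewrite in_fsetE.
  + rewrite ?drop_ok ?drop_ok'; split=> // -[_]; apply.
    have [a aA] : exists a, a \in A.
      case: (fset_0Vmem A) => [E|[a aA]]; [by case: NA|by exists a].
    by exists (act_app a h); exists a.
- by case: (h.1 f == n); [rewrite IH1|rewrite IH2]; reflexivity.
Qed.

Lemma psem_id (a : npred F) (h h' : history F) : psem a h h' -> h' = h.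
Proof.
elim: a h h' => [||f n|a IHa b IHb|a IHa b IHb|a IHa] h h' /=.
- by [].
- by [].
- by case.
- by case=> [/IHa|/IHb].
- by case=> h'' [/IHa -> /IHb].
- by case.
Qed.

Lemma pred_ok (a : npred F) (h h' : history F) :
  psem a h h' <-> fsem (compp ltF ltV negres a) h h'.
Proof.
elim: a h h' => [||f n|a IHa b IHb|a IHa b IHb|a IHa] h h' /=.
- by rewrite ?id_ok ?id_ok'.
- by rewrite ?drop_ok ?drop_ok'.
- case: eqP => E; first rewrite ?id_ok ?id_ok'; last rewrite ?drop_ok ?drop_ok'; intuition.
- by rewrite union_ok IHa IHb.
- rewrite fseq_ok. split; case=> h'' [H1 H2]; exists h''; split;
    by [apply/IHa|apply/IHb].
- rewrite fneg_ok. split.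
  + case=> -> Hn; split=> // -[h''] H; apply: Hn.
    have E := H; rewrite -IHa in E; have := psem_id E => Eh; subst h''.
    exact/IHa.
  + case=> -> Hn; split=> // H; apply: Hn; exists h; exact/IHa.
Qed.

Lemma star_ok (p : prog F) dp ds :
  (forall h h', sem p h h' <-> fsem dp h h') -> is_star ltF ltV negres dp ds ->
  forall h h', sem (PStar p) h h' <-> fsem ds h h'.
Proof.
move=> IH [k [Eds Hfix]] h h' /=. split.
- case=> i; elim: i h => [|i IHi] h /=.
  + move=> ->. rewrite -Hfix /star_step union_ok id_ok; by left.
  + case=> h'' [H1 H2]. rewrite -Hfix /star_step union_ok fseq_ok; right.
    exists h''; split; [exact/IH|exact: IHi].
- rewrite Eds; elim: k h {Eds Hfix} => [|k IHk] h /=.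
  + by rewrite ?id_ok ?id_ok' => ->; exists 0.
  + rewrite /star_step union_ok id_ok fseq_ok.
    case=> [->|[h'' [H1 /IHk [i Hi]]]]; first by exists 0.
    by exists i.+1; exists h''; split => //; apply/IH.
Qed.

End Proofs.

Theorem theorem1 (F : finType) (ltF : rel F) (ltV : rel nat)
    (negres : F -> nat -> fdd F -> fdd F) :
  strict_total ltF -> strict_total ltV -> negres_spec negres ->
  forall (p : prog F) (d : fdd F),
    dup_free p -> compiles ltF ltV negres p d ->
    forall h h' : history F, sem p h h' <-> fsem d h h'.
Proof.
move=> _ _ Hneg p d _ Hc.
elim: Hc => {p d} [a|f n|p q dp dq _ IHp _ IHq|p q dp dq _ IHp _ IHq|p dp ds _ IHp Hs] h h'.
- exact: pred_ok.
- rewrite /=. have E : act_app (single_act f n) h = (upd h.1 f n, h.2).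
    by rewrite /act_app; congr pair; apply/ffunP=> g; rewrite !ffunE; case: eqP.
  split.
  + by move=> ->; exists (single_act f n); rewrite ?in_fsetE.
  + by case=> a; rewrite in_fsetE => /eqP -> ->.
- by rewrite /= union_ok IHp IHq.
- rewrite /= fseq_ok //. split; case=> h'' [H1 H2]; exists h''; split;
    by [apply/IHp|apply/IHq].
- exact: (star_ok Hneg IHp Hs).
Qed.
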